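(* Suppose that Assumptions (A1) and (A2) hold. Then there is a constant $C>0$ depending only on $\alpha$, $\gamma$, the constants in (A1) and (A2), and $\|V\|_{L^\infty}$ (in particular independent of $\epsilon\in(0,1]$) such that every solution $(u,m)$ of Problem 1 satisfies $$\int_0^1 m^{\alpha+1}\,dx+\int_0^1|u_x|^\gamma(1+m)\,dx+\epsilon\int_0^1\left(u^2+m^2+u_x^2+m_x^2\right)dx\le C.$$ The same bound, with the same constant, holds if $V$ is replaced by $\lambda V$ for any $\lambda\in[0,1]$.
   Context: Let $\mathbb{T}=\mathbb{R}/\mathbb{Z}$ be the one-dimensional torus; functions on $\mathbb{T}$ are identified with $1$-periodic functions on $\mathbb{R}$, and integrals over $\mathbb{T}$ are written $\int_0^1$. Let $H:\mathbb{R}\to\mathbb{R}$ be of class $C^2$, $V:\mathbb{T}\to\mathbb{R}$ continuous, $\alpha>0$, and $0<\epsilon\le 1$. We say $(u,m)$ solves Problem 1 if $u,m\in C^2(\mathbb{T})$, $m>0$ on $\mathbb{T}$, and on $\mathbb{T}$: $$u-u_{xx}+H(u_x)+V(x)=m^\alpha+\epsilon(m-m_{xx}),\qquad m-m_{xx}-(H'(u_x)m)_x=1-\epsilon(u-u_{xx}).$$ Assumptions: (A1) there exist constants $C_1,C_2,C_3>0$ and $\gamma>1$ such that $-C_1+C_2|p|^\gamma\le H(p)\le C_1+C_3|p|^\gamma$ for all $p\in\mathbb{R}$. (A2) There exist constants $\tilde C_1,\tilde C_2,\tilde C_3>0$ such that $-\tilde C_1+\tilde C_2|p|^\gamma\le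 pH'(p)-H(p)\le \tilde C_1+\tilde C_3|p|^\gamma$ for all $p$ (same $\gamma$ as in (A1)). *)

(* Defs.v *)
From Stdlib Require Import Reals ClassicalEpsilon.
Open Scope R_scope.

(* 1-periodic functions = functions on the torus T = R/Z *)
Definition periodic1 (f : R -> R) : Prop := forall x, f (x + 1) = f x.

Definition C2_with (f f' f'' : R -> R) : Prop :=
  (forall x, derivable_pt_lim f x (f' x)) /\
  (forall x, derivable_pt_lim f' x (f'' x)) /\
  continuity f''.

(* x^g for x >= 0 and real exponent g > 0, with the convention 0^g = 0
   (Stdlib's Rpower 0 g evaluates to 1, which is wrong here). *)
Definition powr (x g : R) : R := if Rle_dec x 0 then 0 else Rpower x g.

(* Riemann integral over [0,1] (the value of RiemannInt, which does not
   depend on the integrability proof); 0 if f is not Riemann integrable. *)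
Definition Int01 (f : R -> R) : R :=
  epsilon (inhabits 0)
    (fun I => exists pr : Riemann_integrable f 0 1, RiemannInt pr = I).

(* Main.v *)
Require Import Defs.
From Coquelicot Require Import Coquelicot.
From Stdlib Require Import Reals Lra Psatz ClassicalEpsilon FunctionalExtensionality.
Open Scope R_scope.
Lemma pointwise (tC1 tC2 C1 C2 M lambda eps c K D : R)
  (u u2 m m2 u1 m1 h h1 v mA P : R) :
  0 < m -> 0 < eps <= 1 -> 0 <= lambda <= 1 -> Rabs v <= M ->
  -C1 + C2*P <= h -> -tC1 + tC2*P <= u1*h1 - h -> 0 <= P ->
  u - u2 + h + lambda*v = mA + eps*(m - m2) ->
  K = 1 + tC1 + M ->
  mA + K*m <= mA*m/2 + D -> 0 <= mA ->
  0 < c -> c <= 1/2 -> c <= tC2 -> c <= C2 ->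
  c*(mA*m + P*(1+m) + eps*(u^2+m^2+u1^2+m1^2)) <=
  ((m - m2 - 1 + eps*(u-u2))*u + (h1*m)*u1 + eps*(u1^2 + u*u2) + eps*(m1^2 + m*m2)
   + (m2*u + m1*u1 - u2*m - u1*m1) + u2 - eps*m2) + (C1 + M + D).
Proof.
  intros hm he hl hv hA1 hA2 hP E1 hK hY hmA hc hc1 hc2 hc3.
  assert (hv2 : - M <= v <= M) by (split; [apply Ropp_le_cancel; rewrite Ropp_involutive; apply Rle_trans with (Rabs v); [rewrite <- Rabs_Ropp; apply RRle_abs|exact hv] | apply Rle_trans with (Rabs v); [apply RRle_abs|exact hv]]).
  assert (hlv : - M <= lambda * v <= M) by nra.
  assert (h2m : (-tC1 + tC2*P)*m <= (u1*h1 - h)*m) by (apply Rmult_le_compat_r; lra).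
  assert (hlvm : lambda*v*m <= M*m) by nra.
  assert (hS : 0 <= u^2+m^2+u1^2+m1^2) by nra.
  assert (pm1 : 0 <= mA*m) by (apply Rmult_le_pos; lra).
  assert (pm2 : 0 <= P*m) by (apply Rmult_le_pos; lra).
  assert (pm3 : 0 <= eps*(u^2+m^2+u1^2+m1^2)) by (apply Rmult_le_pos; lra).
  assert (c1 : c * (mA*m) <= mA*m/2) by nra.
  assert (c2 : c * (P*m) <= tC2*(P*m)) by nra.
  assert (c3 : c * P <= C2*P) by nra.
  assert (c4 : c * (eps*(u^2+m^2+u1^2+m1^2)) <= eps*(u^2+m^2+u1^2+m1^2)) by nra.
  assert (mA = u - u2 + h + lambda*v - eps*(m-m2)) by lra.
  subst mA. subst K. nra.
Qed.
Lemma young (a K : R) : 0 < a -> 0 <= K -> exists D, 0 <= D /\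
  forall m, 0 < m -> Rpower m a + K*m <= Rpower m a * m / 2 + D.
Proof.
  intros ha hK.
  set (T := Rmax 4 (exp (4*K/a))).
  assert (hT4 : 4 <= T) by apply Rmax_l.
  assert (hTe : exp (4*K/a) <= T) by apply Rmax_r.
  exists (Rpower T a + K*T). split.
  { assert (0 < Rpower T a) by (unfold Rpower; apply exp_pos). nra. }
  intros m hm.
  assert (hpos : 0 < Rpower m a) by (unfold Rpower; apply exp_pos).
  destruct (Rle_lt_dec m T) as [hle|hlt].
  - assert (Rpower m a <= Rpower T a) by (apply Rle_Rpower_l; lra).
    assert (0 <= Rpower m a * m) by nra. nra.
  - assert (hmA : 4*K <= Rpower m a).
    { unfold Rpower.
      assert (4*K/a <= ln m).
      { rewrite <- (ln_exp (4*K/a)). apply Rlt_le, ln_increasing. apply exp_pos. lra. }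
      assert (4*K <= a * ln m).
      { apply Rmult_le_compat_l with (r:=a) in H; [|lra].
        replace (a*(4*K/a)) with (4*K) in H by (field; lra). exact H. }
      pose proof (exp_ineq1_le (a * ln m)).
      destruct (Rle_lt_or_eq_dec _ _ H0) as [h|h].
      + pose proof (exp_increasing _ _ h). pose proof (exp_ineq1_le (4*K)). lra.
      + rewrite <- h. pose proof (exp_ineq1_le (4*K)). lra. }
    assert (0 < Rpower T a) by (unfold Rpower; apply exp_pos).
    nra.
Qed.

Lemma Int01_RInt f : ex_RInt f 0 1 -> Int01 f = RInt f 0 1.
Proof.
  intros hf. pose proof (ex_RInt_Reals_0 _ _ _ hf) as pr.
  unfold Int01.
  destruct (epsilon_spec (inhabits 0)
    (fun I => exists pr : Riemann_integrable f 0 1, RiemannInt pr = I)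
    (ex_intro _ (RiemannInt pr) (ex_intro _ pr eq_refl))) as [pr' e].
  rewrite <- e. symmetry. apply RInt_Reals.
Qed.

Lemma cp_plus f g x : continuity_pt f x -> continuity_pt g x -> continuity_pt (fun y => f y + g y) x.
Proof. intros; apply (continuity_pt_plus f g x); auto. Qed.
Lemma cp_minus f g x : continuity_pt f x -> continuity_pt g x -> continuity_pt (fun y => f y - g y) x.
Proof. intros; apply (continuity_pt_minus f g x); auto. Qed.
Lemma cp_mult f g x : continuity_pt f x -> continuity_pt g x -> continuity_pt (fun y => f y * g y) x.
Proof. intros; apply (continuity_pt_mult f g x); auto. Qed.
Lemma cp_const (c x : R) : continuity_pt (fun _ => c) x.
Proof. apply continuity_pt_const. intros a b; reflexivity. Qed.
Lemma cp_pow f n x : continuity_pt f x -> continuity_pt (fun y => f y ^ n) x.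
Proof. intros h. induction n; simpl. apply cp_const. apply cp_mult; auto. Qed.
Lemma cp_comp f g x : continuity_pt g x -> continuity_pt f (g x) -> continuity_pt (fun y => f (g y)) x.
Proof. intros; apply (continuity_pt_comp g f x); auto. Qed.
Lemma cp_der f f' x : derivable_pt_lim f x (f' x) -> continuity_pt f x.
Proof. intros h. apply derivable_continuous_pt. exists (f' x). exact h. Qed.

Lemma cont_ex_RInt f : (forall x, continuity_pt f x) -> ex_RInt f 0 1.
Proof.
  intros h. apply (@ex_RInt_continuous R_CompleteNormedModule). intros z _.
  apply continuity_pt_filterlim. apply h.
Qed.

Lemma powr_small t g : 1 < g -> 0 <= t <= 1 -> 0 <= powr t g <= t.
Proof.
  intros hg ht. unfold powr. destruct (Rle_dec t 0) as [h|h]. lra.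
  assert (0 < t) by lra. unfold Rpower. split. apply Rlt_le, exp_pos.
  assert (ln t <= 0).
  { destruct (Rle_lt_or_eq_dec _ _ (proj2 ht)) as [h1|h1].
    - rewrite <- ln_1. apply Rlt_le, ln_increasing; lra.
    - subst. rewrite ln_1. lra. }
  assert (g * ln t <= ln t) by nra.
  destruct (Rle_lt_or_eq_dec _ _ H1) as [h1|h1].
  - apply Rlt_le. rewrite <- (exp_ln t) at 2 by lra. apply exp_increasing; exact h1.
  - rewrite h1, exp_ln; lra.
Qed.

Lemma cp_powr g x : 1 < g -> continuity_pt (fun p => powr (Rabs p) g) x.
Proof.
  intros hg. destruct (Req_dec x 0) as [hx|hx].
  - subst x. intros e he. exists (Rmin 1 e). split.
    { apply Rmin_pos; lra. }
    intros y [_ hy]. simpl in *. unfold R_dist in *.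
    rewrite Rabs_R0. unfold powr at 2. destruct (Rle_dec 0 0); [|lra].
    rewrite Rminus_0_r in *.
    assert (Rabs y < 1) by (pose proof (Rmin_l 1 e); lra).
    assert (Rabs y < e) by (pose proof (Rmin_r 1 e); lra).
    pose proof (Rabs_pos y).
    destruct (powr_small (Rabs y) g hg) as [h1 h2]. lra.
    rewrite Rabs_pos_eq; lra.
  - apply continuity_pt_filterlim.
    change (continuous (fun p => powr (Rabs p) g) x).
    apply (continuous_ext_loc _ (fun p => exp (g * ln (Rabs p)))).
    + assert (hr : 0 < Rabs x) by (apply Rabs_pos_lt; exact hx).
      exists (mkposreal _ hr). intros y hy. unfold ball in hy; simpl in hy.
      unfold AbsRing_ball, abs, minus, plus, opp in hy; simpl in hy.
      unfold powr. destruct (Rle_dec (Rabs y) 0) as [h|h].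
      * exfalso. assert (Rabs y = 0) by (pose proof (Rabs_pos y); lra).
        apply Rabs_eq_0 in H. subst y.
        rewrite Rplus_0_l, Rabs_Ropp in hy. lra.
      * reflexivity.
    + apply continuity_pt_filterlim.
      apply cp_comp with (f := exp).
      * apply cp_mult. apply cp_const.
        apply cp_comp with (f := ln). apply Rcontinuity_abs.
        apply derivable_continuous_pt. exists (/ Rabs x).
        apply derivable_pt_lim_ln. apply Rabs_pos_lt; exact hx.
      * apply derivable_continuous_pt, derivable_pt_exp.
Qed.

Lemma per_der f f' : periodic1 f -> (forall x, derivable_pt_lim f x (f' x)) -> periodic1 f'.
Proof.
  intros hp hd x.
  assert (h : derivable_pt_lim (fun y => f (y + 1)) x (f' (x+1))).
  { replace (f' (x+1)) with (f' (x+1) * 1) by ring.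
    apply (derivable_pt_lim_comp (fun y => y + 1) f x 1 (f' (x+1))).
    - pose proof (derivable_pt_lim_plus id (fun _ => 1) x 1 0 (derivable_pt_lim_id x) (derivable_pt_lim_const 1 x)) as hh.
      rewrite Rplus_0_r in hh. exact hh.
    - apply hd. }
  assert (e : (fun y => f (y + 1)) = f) by (apply functional_extensionality; exact hp).
  rewrite e in h. exact (uniqueness_limite f x _ _ h (hd x)).
Qed.
Lemma RIp f g : ex_RInt f 0 1 -> ex_RInt g 0 1 -> RInt (fun x => f x + g x) 0 1 = RInt f 0 1 + RInt g 0 1.
Proof. intros; exact (RInt_plus f g 0 1 H H0). Qed.
Lemma RIs f l : ex_RInt f 0 1 -> RInt (fun x => l * f x) 0 1 = l * RInt f 0 1.
Proof. intros; exact (RInt_scal f 0 1 l H). Qed.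
Lemma RIc (c : R) : RInt (fun _ => c) 0 1 = c.
Proof. rewrite RInt_const. unfold scal; simpl. unfold mult; simpl. ring. Qed.
Lemma eRp f g : ex_RInt f 0 1 -> ex_RInt g 0 1 -> ex_RInt (fun x => f x + g x) 0 1.
Proof. intros; exact (ex_RInt_plus f g 0 1 H H0). Qed.
Lemma eRs f l : ex_RInt f 0 1 -> ex_RInt (fun x => l * f x) 0 1.
Proof. intros; exact (ex_RInt_scal f 0 1 l H). Qed.
Lemma FTC (F dF : R -> R) : (forall x, derivable_pt_lim F x (dF x)) -> (forall x, continuity_pt dF x) -> RInt dF 0 1 = F 1 - F 0.
Proof. intros h1 h2. apply is_RInt_unique.
  exact (is_RInt_derive F dF 0 1 (fun x _ => proj2 (is_derive_Reals _ _ _) (h1 x)) (fun x _ => proj1 (continuity_pt_filterlim _ _) (h2 x))). Qed.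

Lemma dl_plus f g x a b : derivable_pt_lim f x a -> derivable_pt_lim g x b -> derivable_pt_lim (fun y => f y + g y) x (a+b).
Proof. intros; exact (derivable_pt_lim_plus f g x a b H H0). Qed.
Lemma dl_minus f g x a b : derivable_pt_lim f x a -> derivable_pt_lim g x b -> derivable_pt_lim (fun y => f y - g y) x (a-b).
Proof. intros; exact (derivable_pt_lim_minus f g x a b H H0). Qed.
Lemma dl_mult f g x a b : derivable_pt_lim f x a -> derivable_pt_lim g x b -> derivable_pt_lim (fun y => f y * g y) x (a * g x + f x * b).
Proof. intros; exact (derivable_pt_lim_mult f g x a b H H0). Qed.
Lemma dl_const (c x : R) : derivable_pt_lim (fun _ => c) x 0.
Proof. exact (derivable_pt_lim_const c x). Qed.
Lemma dl_eq f x a b : derivable_pt_lim f x a -> a = b -> derivable_pt_lim f x b.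
Proof. intros h e; subst; exact h. Qed.

Theorem mainTheorem3
  (alpha gamma C1 C2 C3 tC1 tC2 tC3 M : R)
  (Halpha : 0 < alpha) (Hgamma : 1 < gamma)
  (HC1 : 0 < C1) (HC2 : 0 < C2) (HC3 : 0 < C3)
  (HtC1 : 0 < tC1) (HtC2 : 0 < tC2) (HtC3 : 0 < tC3) :
  exists C : R, 0 < C /\
  forall (H H' H'' V : R -> R),
    C2_with H H' H'' ->
    (* (A1) *)
    (forall p, - C1 + C2 * powr (Rabs p) gamma <= H p /\
               H p <= C1 + C3 * powr (Rabs p) gamma) ->
    (* (A2) *)
    (forall p, - tC1 + tC2 * powr (Rabs p) gamma <= p * H' p - H p /\
               p * H' p - H p <= tC1 + tC3 * powr (Rabs p) gamma) ->
    continuity V -> periodic1 V ->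
    (* M = ||V||_{L^infty} *)
    (forall x, Rabs (V x) <= M) -> (exists x0, Rabs (V x0) = M) ->
  forall (lambda eps : R), 0 <= lambda <= 1 -> 0 < eps <= 1 ->
  forall (u u' u'' m m' m'' : R -> R),
    C2_with u u' u'' -> C2_with m m' m'' ->
    periodic1 u -> periodic1 m ->
    (forall x, 0 < m x) ->
    (* first equation of Problem 1, with V replaced by lambda V *)
    (forall x, u x - u'' x + H (u' x) + lambda * V x
               = Rpower (m x) alpha + eps * (m x - m'' x)) ->
    (* second equation: m - m_xx - (H'(u_x) m)_x = 1 - eps (u - u_xx) *)
    (forall x, derivable_pt_lim (fun y => H' (u' y) * m y) x
                 (m x - m'' x - (1 - eps * (u x - u'' x)))) ->
    Int01 (fun x => Rpower (m x) (alpha + 1))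
    + Int01 (fun x => powr (Rabs (u' x)) gamma * (1 + m x))
    + eps * Int01 (fun x => u x ^ 2 + m x ^ 2 + u' x ^ 2 + m' x ^ 2)
    <= C.
Proof.
  destruct (young alpha (1 + tC1 + Rabs M) Halpha) as [D [hD hY]].
  { pose proof (Rabs_pos M); lra. }
  set (c := Rmin (1/2) (Rmin tC2 C2)).
  assert (hc0 : 0 < c) by (unfold c; repeat apply Rmin_pos; lra).
  assert (hc1 : c <= 1/2) by (unfold c; apply Rmin_l).
  assert (hc2 : c <= tC2) by (unfold c; eapply Rle_trans; [apply Rmin_r| apply Rmin_l]).
  assert (hc3 : c <= C2) by (unfold c; eapply Rle_trans; [apply Rmin_r| apply Rmin_r]).
  exists ((C1 + Rabs M + D) / c). split.
  { pose proof (Rabs_pos M). apply Rdiv_lt_0_compat; lra. }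
  intros H H' H'' V [hH1 [hH2 hH3]] A1 A2 hVc hVp hVM _ lambda eps hl he
    u u' u'' m m' m'' [hu1 [hu2 hu3]] [hm1 [hm2 hm3]] hup hmp hmpos E1 E2.
  assert (cu : forall x, continuity_pt u x) by (intro x; exact (cp_der u u' x (hu1 x))).
  assert (cu' : forall x, continuity_pt u' x) by (intro x; exact (cp_der u' u'' x (hu2 x))).
  assert (cm : forall x, continuity_pt m x) by (intro x; exact (cp_der m m' x (hm1 x))).
  assert (cm' : forall x, continuity_pt m' x) by (intro x; exact (cp_der m' m'' x (hm2 x))).
  assert (cHu : forall x, continuity_pt (fun y => H (u' y)) x)
    by (intro x; apply (cp_comp H u'); [apply cu' | exact (cp_der H H' _ (hH1 _))]).
  assert (cH'u : forall x, continuity_pt (fun y => H' (u' y)) x)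
    by (intro x; apply (cp_comp H' u'); [apply cu' | exact (cp_der H' H'' _ (hH2 _))]).
  assert (cP : forall x, continuity_pt (fun y => powr (Rabs (u' y)) gamma) x)
    by (intro x; apply (cp_comp (fun p => powr (Rabs p) gamma) u'); [apply cu' | apply cp_powr; exact Hgamma]).
  assert (cmA : forall x, continuity_pt (fun y => Rpower (m y) (alpha + 1)) x).
  { intro x. unfold Rpower. apply cp_comp with (f := exp).
    - apply cp_mult. apply cp_const. apply cp_comp with (f := ln). apply cm.
      apply derivable_continuous_pt. exists (/ m x). apply derivable_pt_lim_ln. apply hmpos.
    - apply derivable_continuous_pt, derivable_pt_exp. }
  set (dPhi := fun x => (m x - m'' x - 1 + eps*(u x - u'' x))*u x + (H'(u' x)*m x)*u' x
     + eps*(u' x^2 + u x*u'' x) + eps*(m' x^2 + m x*m'' x)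
     + (m'' x*u x + m' x*u' x - u'' x*m x - u' x*m' x) + u'' x - eps*m'' x).
  set (Phi := fun x => H'(u' x)*m x*u x + eps*(u x*u' x) + eps*(m x*m' x)
     + (m' x*u x - u' x*m x) + u' x - eps*m' x).
  assert (hPhi : forall x, derivable_pt_lim Phi x (dPhi x)).
  { intro x. eapply dl_eq.
    - unfold Phi.
      repeat first [apply E2 | apply hu1 | apply hu2 | apply hm1 | apply hm2 | apply dl_const
                   | apply dl_minus | apply dl_plus | apply dl_mult].
    - unfold dPhi. cbv beta. ring. }
  assert (cdPhi : forall x, continuity_pt dPhi x).
  { intro x. unfold dPhi.
    repeat first [apply cu | apply cu' | apply hu3 | apply cm | apply cm' | apply hm3 | apply cH'u
                 | apply cp_const | apply cp_minus | apply cp_plus | apply cp_mult | apply cp_pow]. }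
  assert (hu'p : periodic1 u') by exact (per_der u u' hup hu1).
  assert (hm'p : periodic1 m') by exact (per_der m m' hmp hm1).
  assert (hI0 : RInt dPhi 0 1 = 0).
  { rewrite (FTC Phi dPhi hPhi cdPhi). unfold Phi.
    pose proof (hup 0) as p1. pose proof (hmp 0) as p2. pose proof (hu'p 0) as p3. pose proof (hm'p 0) as p4.
    rewrite Rplus_0_l in p1, p2, p3, p4. rewrite p1, p2, p3, p4. apply Rminus_diag_eq; reflexivity. }
  set (f1 := fun x => Rpower (m x) (alpha + 1)).
  set (f2 := fun x => powr (Rabs (u' x)) gamma * (1 + m x)).
  set (f3 := fun x => u x ^ 2 + m x ^ 2 + u' x ^ 2 + m' x ^ 2).
  assert (e1 : ex_RInt f1 0 1) by (apply cont_ex_RInt; exact cmA).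
  assert (e2 : ex_RInt f2 0 1).
  { apply cont_ex_RInt. intro x. unfold f2. apply cp_mult. apply cP. apply cp_plus. apply cp_const. apply cm. }
  assert (e3 : ex_RInt f3 0 1).
  { apply cont_ex_RInt. intro x. unfold f3.
    repeat first [apply cu | apply cu' | apply cm | apply cm' | apply cp_plus | apply cp_pow]. }
  assert (ed : ex_RInt dPhi 0 1) by (apply cont_ex_RInt; exact cdPhi).
  rewrite (Int01_RInt _ e1), (Int01_RInt _ e2), (Int01_RInt _ e3).
  assert (hM : 0 <= M) by (pose proof (hVM 0); pose proof (Rabs_pos (V 0)); lra).
  assert (key : RInt (fun x => c * (f1 x + f2 x + eps * f3 x)) 0 1
             <= RInt (fun x => dPhi x + (C1 + Rabs M + D)) 0 1).
  { apply RInt_le. lra.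
    - apply eRs. apply eRp. apply eRp; assumption. apply eRs; assumption.
    - apply eRp. assumption. apply cont_ex_RInt. intro; apply cp_const.
    - intros x _. unfold f1, f2, f3, dPhi.
      rewrite Rpower_plus, Rpower_1 by apply hmpos.
      apply (pointwise tC1 tC2 C1 C2 (Rabs M) lambda eps c (1 + tC1 + Rabs M) D
        (u x) (u'' x) (m x) (m'' x) (u' x) (m' x) (H (u' x)) (H' (u' x)) (V x)
        (Rpower (m x) alpha) (powr (Rabs (u' x)) gamma)); try assumption.
      + apply hmpos.
      + eapply Rle_trans. apply hVM. apply RRle_abs.
      + apply A1.
      + apply A2.
      + unfold powr. destruct (Rle_dec _ 0). lra. apply Rlt_le; unfold Rpower; apply exp_pos.
      + apply E1.
      + reflexivity.
      + apply hY, hmpos.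
      + apply Rlt_le; unfold Rpower; apply exp_pos. }
  rewrite RIs in key. rewrite RIp in key. rewrite RIp in key. rewrite RIs in key.
  rewrite RIp in key. rewrite RIc in key. rewrite hI0 in key.
  apply Rmult_le_reg_l with c. exact hc0.
  assert (X : c * ((C1 + Rabs M + D) / c) = C1 + Rabs M + D) by (field; apply Rgt_not_eq, hc0).
  rewrite X. revert key. generalize (RInt f1 0 1) (RInt f2 0 1) (RInt f3 0 1) (C1 + Rabs M + D).
  intros a1 a2 a3 k hk. rewrite Rplus_0_l in hk. exact hk.
  all: try assumption.
  - apply cont_ex_RInt; intro; apply cp_const.
  - apply eRp; assumption.
  - apply eRs; assumption.
  - apply eRp. apply eRp; assumption. apply eRs; assumption.
Qed.
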